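(* Let $T\in(0,\infty)$, $d,m\in\mathbb{N}$, let $D\subseteq\mathbb{R}^d$ be open, $\mu\colon D\to\mathbb{R}^d$, $\sigma\colon D\to\mathbb{R}^{d\times m}$ functions, let $\phi\colon\mathbb{R}^d\times(0,T]\times\mathbb{R}^m\to\mathbb{R}^d$ be $(\mu,\sigma)$-consistent with respect to Brownian motion, and let $D_t\in\mathcal{B}(\mathbb{R}^d)$, $t\in(0,T]$, be a non-increasing family of sets with $D\subseteq\bigcup_{t\in(0,T]}\mathring{D}_t$. Then the function $\mathbb{R}^d\times(0,T]\times\mathbb{R}^m\ni(x,t,y)\mapsto\mathbb{1}_{D_t}(x)\,\phi(x,t,y)\in\mathbb{R}^d$ is $(\mu,\sigma)$-consistent with respect to Brownian motion.
   Context: Consistency: a function $\phi\colon\mathbb{R}^d\times(0,T]\times\mathbb{R}^m\to\mathbb{R}^d$ is $(\mu,\sigma)$-consistent with respect to Brownian motion if for every $t\in(0,T]$ the map $(x,y)\mapsto\phi(x,t,y)$ is Borel measurable and there exist a probability space and a standard $m$-dimensional Brownian motion $W$ on it such that for every nonempty compact $K\subseteq D$: $\limsup_{t\searrow0}\big(t^{-1/2}\sup_{x\in K}\mathbb{E}[\|\sigma(x)W_t-\phi(x,t,W_t)\|]\big)=0=\limsup_{t\searrow0}\big(\sup_{x\in K}\|\mu(x)-t^{-1}\mathbb{E}[\phi(x,t,W_t)]\|\big)$. Non-increasing family: $D_{t_2}\subseteq D_{t_1}$ for $t_1\le t_2$; $\mathring{D}_t$ is the interior. *)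

(* Defs.v *)
From HB Require Import structures.
From mathcomp Require Import all_boot all_order all_algebra.
From mathcomp Require Import all_classical all_reals all_analysis.
Set Implicit Arguments. Unset Strict Implicit. Unset Printing Implicit Defensive.
Import Order.TTheory GRing.Theory Num.Theory.
Import numFieldNormedType.Exports.
Local Open Scope classical_set_scope.
Local Open Scope ring_scope.

Section Defs.
Context {R : realType}.

Definition borel {T : topologicalType} : set (set T) :=
  <<s [set U : set T | open U] >>.

Definition borel_measurable {T U : topologicalType} (f : T -> U) : Prop :=
  forall B : set U, borel B -> borel (f @^-1` B).

Definition enorm {d : nat} (v : 'cV[R]_d) : R :=
  Num.sqrt (\sum_(i < d) v i 0 ^+ 2).

Definition Ecol {d0 : measure_display} {Om : measurableType d0}
  (P : probability Om R) {d : nat} (X : Om -> 'cV[R]_d) : 'cV[R]_d :=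
  \col_(i < d) Rintegral P setT (fun w => X w i 0).

(* Standard m-dimensional Brownian motion on [0, oo) on (Om, P):
   measurable marginals, W_0 = 0, continuous paths, and increments over
   0 = t_0 < t_1 < ... < t_n whose coordinates are independent with
   N(0, t_{k+1} - t_k) laws (joint law given on rectangles). *)
Definition is_std_BM {d0 : measure_display} {Om : measurableType d0}
  (P : probability Om R) {m : nat} (W : R -> Om -> 'cV[R]_m) : Prop :=
  [/\ (forall t, 0 <= t -> forall B : set 'cV[R]_m, borel B ->
          measurable (W t @^-1` B)),
      (forall w, W 0 w = 0),
      (forall w, {within `[0, +oo[, continuous (fun t => W t w)}) &
      (forall (n : nat) (ts : nat -> R) (A : nat -> 'I_m -> set R),
          ts 0%N = 0 -> (forall k, (k < n)%N -> ts k < ts k.+1) ->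
          (forall k j, measurable (A k j)) ->
          P [set w | forall k, (k < n)%N -> forall j,
                       W (ts k.+1) w j 0 - W (ts k) w j 0 \in A k j]
          = \big[*%E/1%E]_(k < n) \big[*%E/1%E]_(j < m)
              normal_prob 0 (Num.sqrt (ts k.+1 - ts k)) (A k j))].

(* (mu, sigma)-consistency with respect to Brownian motion of
   phi : R^d x (0,T] x R^m -> R^d (only t in (0,T] is relevant). *)
Definition bm_consistent {d m : nat} (T : R) (D : set 'cV[R]_d)
  (mu : 'cV[R]_d -> 'cV[R]_d) (sigma : 'cV[R]_d -> 'M[R]_(d, m))
  (phi : 'cV[R]_d -> R -> 'cV[R]_m -> 'cV[R]_d) : Prop :=
  (forall t, 0 < t <= T ->
     borel_measurable (fun p : 'cV[R]_d * 'cV[R]_m => phi p.1 t p.2)) /\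
  exists (d0 : measure_display) (Om : measurableType d0)
         (P : probability Om R) (W : R -> Om -> 'cV[R]_m),
    is_std_BM P W /\
    forall K : set 'cV[R]_d, compact K -> K !=set0 -> K `<=` D ->
      limf_esup (fun t : R => ((Num.sqrt t)^-1)%:E *
          ereal_sup [set (\int[P]_w
              (enorm (sigma x *m W t w - phi x t (W t w)))%:E)%E | x in K])%E
        (at_right (0 : R)) = 0%E /\
      limf_esup (fun t : R => ereal_sup
          [set (enorm (mu x - t^-1 *: Ecol P (fun w => phi x t (W t w))))%:E
          | x in K]) (at_right (0 : R)) = 0%E.

End Defs.

(* Main.v *)
Require Import Defs.
From HB Require Import structures.
From mathcomp Require Import all_boot all_order all_algebra.
From mathcomp Require Import all_classical all_reals all_analysis.
From mathcomp Require Import finmap.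
Import Order.TTheory GRing.Theory Num.Theory.
Import numFieldNormedType.Exports.
Local Open Scope classical_set_scope.
Local Open Scope ring_scope.

Lemma le_limf_esup_near {R : realType} (F : set_system R)
  {FF : Filter F} (f g : R -> \bar R) :
  (\forall x \near F, f x = g x) -> (limf_esup f F <= limf_esup g F)%E.
Proof.
move=> fg; rewrite !limf_esupE.
apply: le_ereal_inf_tmp => _ [V FV <-].
have FVE : F (V `&` [set x | f x = g x]) by apply: filterI.
apply: (@le_trans _ _ (ereal_sup (f @` (V `&` [set x | f x = g x])))).
  by apply: ereal_inf_lbound; exists (V `&` [set x | f x = g x]).
apply: le_ereal_sup => _ [x [Vx fgx] <-]; exists x => //.
Qed.

Lemma limf_esup_near {R : realType} (F : set_system R)
  {FF : Filter F} (f g : R -> \bar R) :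
  (\forall x \near F, f x = g x) -> limf_esup f F = limf_esup g F.
Proof.
move=> fg; apply/eqP; rewrite eq_le !le_limf_esup_near //.
by apply: filterS fg => x ->.
Qed.

Lemma borel_preimage_cont {T U : topologicalType} (f : T -> U) (A : set U) :
  continuous f -> borel A -> borel (f @^-1` A).
Proof.
move=> cf; move: A; suff: @borel U `<=` [set B | borel (f @^-1` B)] by [].
apply: smallest_sub.
- split => /=.
  + by rewrite preimage_set0; exact: sigma_algebra0.
  + move=> B hB; rewrite !setTD -preimage_setC -setTD.
    exact: sigma_algebraCD.
  + move=> F hF; rewrite preimage_bigcup.
    exact: sigma_algebra_bigcup.
- move=> B oB /=; apply: sub_sigma_algebra.
  by apply: open_comp => // x _; exact: cf.
Qed.

Section borel_ops.
Context {T : topologicalType}.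
Implicit Types A B : set T.

Lemma borel0 : borel (@set0 T).
Proof. exact: sigma_algebra0. Qed.

Lemma borelC A : borel A -> borel (~` A).
Proof. by move=> hA; rewrite -setTD; exact: sigma_algebraCD. Qed.

Lemma borelT : borel (@setT T).
Proof. by rewrite -setC0; apply: borelC; exact: borel0. Qed.

Lemma borelU A B : borel A -> borel B -> borel (A `|` B).
Proof.
move=> hA hB; rewrite -bigcup2E; apply: sigma_algebra_bigcup => -[|[|k]] //=.
exact: borel0.
Qed.

Lemma borelI A B : borel A -> borel B -> borel (A `&` B).
Proof.
move=> hA hB; rewrite -[A `&` B]setCK setCI.
by apply: borelC; apply: borelU; exact: borelC.
Qed.
End borel_ops.

Lemma fst_cont {T U : topologicalType} : continuous (@fst T U).
Proof. by move=> [x y]; exact: cvg_fst. Qed.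

Lemma meas_indic {R : realType} {d m : nat} (S : set 'cV[R]_d)
  (g : 'cV[R]_d * 'cV[R]_m -> 'cV[R]_d) :
  borel S -> borel_measurable g ->
  borel_measurable (fun p : 'cV[R]_d * 'cV[R]_m => \1_S p.1 *: g p).
Proof.
move=> hS hg B hB.
have -> : (fun p : 'cV[R]_d * 'cV[R]_m => \1_S p.1 *: g p) @^-1` B =
  ((fst @^-1` S) `&` (g @^-1` B)) `|`
  (~` (fst @^-1` S) `&` [set _ | B 0]).
  apply/seteqP; split => p /=; case: (pselect (S p.1)) => Sp;
    rewrite indicE ?(mem_set Sp) ?(memNset Sp) ?scale1r ?scale0r.
  - by move=> Bp; left.
  - by move=> Bp; right.
  - by case=> -[].
  - by case=> -[].
apply: borelU; apply: borelI.
- exact: borel_preimage_cont fst_cont hS.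
- exact: hg.
- by apply: borelC; exact: borel_preimage_cont fst_cont hS.
- case: (pselect (B 0)) => B0.
  + have -> : [set _ : 'cV[R]_d * 'cV[R]_m | B 0] = setT by apply/seteqP; split.
    exact: borelT.
  + have -> : [set _ : 'cV[R]_d * 'cV[R]_m | B 0] = set0 by apply/seteqP; split.
    exact: borel0.
Qed.

Lemma cover_time {R : realType} {d : nat} (T : R) (K : set 'cV[R]_d)
  (Dt : R -> set 'cV[R]_d) :
  0 < T -> compact K ->
  (forall t1 t2, 0 < t1 -> t1 <= t2 -> t2 <= T -> Dt t2 `<=` Dt t1) ->
  K `<=` \bigcup_(t in `]0, T]) interior (Dt t) ->
  exists t0, 0 < t0 /\ forall t, 0 < t <= t0 -> K `<=` Dt t.
Proof.
move=> T0 cK mono cov.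
move: cK; rewrite compact_cover => /(_ R [set` `]0, T]] (fun t => interior (Dt t))).
case => [t _|//|D' sD' Kc]; first exact: open_interior.
have memD i : i \in D' -> 0 < i <= T.
  by move=> /sD' /set_mem /=; rewrite in_itv.
exists (\big[Order.min/T]_(i <- D') i); split.
  rewrite big_seq; elim/big_ind: _ => //; first by move=> a b a0 b0; rewrite lt_min a0 b0.
  by move=> i /memD /andP[].
move=> t /andP[t0 tle] x Kx.
have [i D'i Dx] := Kc x Kx.
have /andP[i0 iT] := memD i D'i.
apply: (mono t i t0 _ iT); last exact: interior_subset.
by apply: (le_trans tle); exact: ge_bigmin_seq.
Qed.

Theorem lemma3p2 (R : realType) (T : R) (d m : nat) (D : set 'cV[R]_d)
  (mu : 'cV[R]_d -> 'cV[R]_d) (sigma : 'cV[R]_d -> 'M[R]_(d, m))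
  (phi : 'cV[R]_d -> R -> 'cV[R]_m -> 'cV[R]_d) (Dt : R -> set 'cV[R]_d) :
  0 < T -> open D ->
  bm_consistent T D mu sigma phi ->
  (forall t, 0 < t <= T -> borel (Dt t)) ->
  (forall t1 t2, 0 < t1 -> t1 <= t2 -> t2 <= T -> Dt t2 `<=` Dt t1) ->
  D `<=` \bigcup_(t in `]0, T]) interior (Dt t) ->
  bm_consistent T D mu sigma (fun x t y => \1_(Dt t) x *: phi x t y).
Proof.
move=> T0 oD [meas [d0 [Om [P [W [BM H]]]]]] Dtb mono cov.
split.
  move=> t tT; have h := meas_indic _ _ (Dtb t tT) (meas t tT); exact h.
exists d0, Om, P, W; split; first exact: BM.
move=> K cK K0 KD.
have KD' : K `<=` \bigcup_(t in `]0, T]) interior (Dt t) by move=> x /KD /cov.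
have [t0 [t00 Kt]] := @cover_time _ _ T K Dt T0 cK mono KD'.
have [H1 H2] := H K cK K0 KD.
have near_t : \forall t \near (at_right (0 : R)), 0 < t <= t0.
  near=> t; apply/andP; split; near: t; [exact: nbhs_right_gt|exact: nbhs_right_le].
split.
- rewrite -H1; apply: limf_esup_near; apply: filterS near_t => t tt.
  congr (_ * ereal_sup _)%E; apply: eq_imagel => x Kx.
  have -> : \1_(Dt t) x = 1 :> R by rewrite indicE mem_set //; exact: (Kt t tt x Kx).
  by congr (integral _ _ _); apply: funext => w; rewrite scale1r.
- rewrite -H2; apply: limf_esup_near; apply: filterS near_t => t tt.
  congr (ereal_sup _); apply: eq_imagel => x Kx.
  have -> : \1_(Dt t) x = 1 :> R by rewrite indicE mem_set //; exact: (Kt t tt x Kx).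
  suff -> : (fun w => 1 *: phi x t (W t w)) = (fun w => phi x t (W t w)) by [].
  by apply: funext => w; rewrite scale1r.
Unshelve. all: by end_near.
Qed.
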